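(* For $k \ge 3$ let $L_k=\lim_{r\to\infty} R_r(k)^{1/r}$, and assume the Diagonal Conjecture (DC) holds: for every $r \ge 2$, all integers $3 \le s \le t$ and all integers $k_3,\dots,k_r \ge 2$, we have $R(s,t,k_3,\dots,k_r) \ge R(s-1,t+1,k_3,\dots,k_r)$. Then (a) either all $L_k$ ($k\ge 3$) are finite or all of them are infinite; and (b) if $L_3$ is finite, then $L_k < L_{k+1}$ for all $k \ge 3$.
   Context: $R(k_1,\dots,k_r)$ denotes the multicolor Ramsey number: the least $n$ such that every coloring of the edges of $K_n$ with $r$ colors contains, for some $i$, a complete subgraph $K_{k_i}$ all of whose edges have color $i$; it is symmetric in its arguments. $R_r(k)=R(k,\dots,k)$ with $r$ arguments equal to $k$. It is known (independently of DC) that each limit $L_k$ exists (possibly infinite) and $L_k \le L_{k+1}$. *)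

(* Defs.v *)
From HB Require Import structures.
From mathcomp Require Import all_boot all_order all_algebra.
From mathcomp Require Import all_classical all_reals all_analysis.
Set Implicit Arguments. Unset Strict Implicit. Unset Printing Implicit Defensive.
Import Order.TTheory GRing.Theory Num.Theory.

(* A coloring of the edges of K_n (vertices 'I_n) with r = size ks colors:
   the edge {x,y} with x < y receives color c (x, y).  [has_ramsey ks n] says:
   every such coloring has, for some color i, a set S of exactly ks_i vertices
   all of whose edges have color i. *)
Definition has_ramsey (ks : seq nat) (n : nat) : bool :=
  [forall c : {ffun 'I_n * 'I_n -> 'I_(size ks)},
     [exists i : 'I_(size ks), [exists S : {set 'I_n},
        (#|S| == nth 0 ks i) &&
        [forall x in S, forall y in S, (x < y)%N ==> (c (x, y) == i)]]]].

(* The multicolor Ramsey number R(k_1,...,k_r): the least n with has_ramsey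
   (it exists by Ramsey's theorem; the value 0 in the impossible other case). *)
Definition ramsey (ks : seq nat) : nat :=
  match pselect (exists n, has_ramsey ks n) with
  | left H => ex_minn H
  | right _ => 0%N
  end.

Definition ramsey_diag (r k : nat) : nat := ramsey (nseq r k).

Definition Lk (R : realType) (k : nat) : \bar R :=
  limn (fun r : nat => ((ramsey_diag r k)%:R `^ (r%:R^-1) : R)%:E).

(* Diagonal Conjecture: for all r >= 2 (r = size ks + 2), 3 <= s <= t,
   k_3..k_r >= 2:  R(s,t,k_3,..,k_r) >= R(s-1,t+1,k_3,..,k_r). *)
Definition DC : Prop :=
  forall (s t : nat) (ks : seq nat),
    (3 <= s)%N -> (s <= t)%N -> all (fun k => 2 <= k)%N ks ->
    (ramsey (s.-1 :: t.+1 :: ks) <= ramsey (s :: t :: ks))%N.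

(* Main.v *)
Require Import Defs.
From HB Require Import structures.
From mathcomp Require Import all_boot all_order all_algebra.
From mathcomp Require Import all_classical all_reals all_analysis.
From mathcomp Require Import zify ring lra.
Import Order.TTheory GRing.Theory Num.Theory.
Set Implicit Arguments. Unset Strict Implicit. Unset Printing Implicit Defensive.

Definition monoc n (c : nat -> nat -> nat) (i : nat) (S : {set 'I_n}) :=
  forall x y : 'I_n, x \in S -> y \in S -> (x < y)%N -> c x y = i.

Definition HR (ks : seq nat) (n : nat) : Prop :=
  forall c : nat -> nat -> nat, (forall x y, (x < n)%N -> (y < n)%N -> (c x y < size ks)%N) ->
  exists i, exists S : {set 'I_n}, (i < size ks)%N /\ #|S| = nth 0 ks i /\ monoc c i S.

Lemma HR_has ks n : HR ks n <-> has_ramsey ks n.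
Proof.
split.
- move=> H; apply/forallP => cf.
  pose c x y := match (insub x : option 'I_n), (insub y : option 'I_n) with
                | Some x', Some y' => val (cf (x', y')) | _, _ => 0%N end.
  have Hc : forall x y, (x < n)%N -> (y < n)%N -> (c x y < size ks)%N.
    move=> x y hx hy; rewrite /c; case: insubP => [x' _ _|]; last by move=> /negP.
    case: insubP => [y' _ _|]; last by move=> /negP.
    exact: ltn_ord.
  have [i [S [hi [hS hm]]]] := H c Hc.
  apply/existsP; exists (Ordinal hi); apply/existsP; exists S.
  rewrite hS eqxx /=; apply/forallP => x; apply/implyP => xS.
  apply/forallP => y; apply/implyP => yS; apply/implyP => xy.
  have := hm x y xS yS xy; rewrite /c !valK => hc.
  by apply/eqP; apply: val_inj.
- move=> H c Hc.
  pose cf := [ffun p : 'I_n * 'I_n =>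
                (Ordinal (Hc p.1 p.2 (ltn_ord _) (ltn_ord _)) : 'I_(size ks))].
  have /existsP[i /existsP[S /andP[/eqP hS /forallP hm]]] := (forallP H) cf.
  exists i, S; split => //; split => // x y xS yS xy.
  move: (hm x); rewrite xS /= => /forallP /(_ y); rewrite yS xy /= => /eqP.
  by rewrite ffunE => /(congr1 val).
Qed.

Lemma ramsey_spec ks : (exists n, HR ks n) ->
  HR ks (ramsey ks) /\ forall n, HR ks n -> (ramsey ks <= n)%N.
Proof.
move=> [n Hn]; rewrite /ramsey; case: pselect => [H|H]; last first.
  by exfalso; apply: H; exists n; apply/HR_has.
case: ex_minnP => m hm hmin; split; first by apply/HR_has.
by move=> k /HR_has; exact: hmin.
Qed.

Definition lf m n (h : 'I_m -> 'I_n) (x : nat) : nat :=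
  if (insub x : option 'I_m) is Some x' then val (h x') else 0%N.

Lemma lfE m n (h : 'I_m -> 'I_n) (x : 'I_m) : lf h x = h x.
Proof. by rewrite /lf valK. Qed.

Lemma mono_img m n (h : 'I_m -> 'I_n) c i (S : {set 'I_m}) :
  (forall x y : 'I_m, (x < y)%N -> (h x < h y)%N) ->
  monoc (fun x y => c (lf h x) (lf h y)) i S ->
  #|h @: S| = #|S| /\ monoc c i (h @: S).
Proof.
move=> hinc hm; split.
  apply: card_imset => x y hxy; apply: val_inj; apply/eqP.
  case: (ltngtP x y) => // h1; [have := hinc _ _ h1 | have := hinc _ _ h1];
  by rewrite hxy ltnn.
move=> u v /imsetP[x xS ->] /imsetP[y yS ->] huv.
have xy : (x < y)%N.
  case: (ltngtP x y) => // h1; first by have := hinc _ _ h1; lia.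
  have e : x = y by apply: val_inj.
  by move: huv; rewrite e ltnn.
by have := hm x y xS yS xy; rewrite /= !lfE.
Qed.

Lemma HR_mono ks n m : HR ks n -> (n <= m)%N -> HR ks m.
Proof.
move=> H nm c Hc.
have [i [S [hi [hS hm]]]] := H c (fun x y hx hy => Hc x y (leq_trans hx nm) (leq_trans hy nm)).
have hm' : monoc (fun x y => c (lf (widen_ord nm) x) (lf (widen_ord nm) y)) i S.
  by move=> x y xS yS xy; rewrite !lfE /=; apply: hm.
have [e1 e2] := @mono_img n m (widen_ord nm) c i S (fun x y h => h) hm'.
by exists i, (widen_ord nm @: S); split => //; split => //; rewrite e1.
Qed.

Lemma sub_card (T : finType) (S : {set T}) k : (k <= #|S|)%N ->
  exists S' : {set T}, S' \subset S /\ #|S'| = k.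
Proof.
move=> hk; exists [set x | x \in take k (enum S)]; split.
  by apply/fintype.subsetP => x; rewrite inE => /mem_take; rewrite mem_enum.
rewrite cardsE; have /card_uniqP -> : uniq (take k (enum S)).
  by apply: take_uniq; apply: enum_uniq.
by rewrite size_take -cardE; case: ltngtP hk => //; lia.
Qed.

Lemma two_elems n (S : {set 'I_n}) : (1 < #|S|)%N ->
  exists x y, [/\ x \in S, y \in S & (x < y)%N].
Proof.
move=> /card_gt1P [x [y [xS yS xy]]].
case: (ltngtP x y) => h; first by exists x, y.
  by exists y, x.
by move: xy; rewrite (val_inj h) eqxx.
Qed.

Lemma mono_sub n c i (S S' : {set 'I_n}) : S' \subset S -> monoc c i S -> monoc c i S'.
Proof. by move=> /fintype.subsetP sub hm x y xS yS; apply: hm; apply: sub. Qed.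

Lemma HR_transfer ks ks' (g : nat -> nat) n :
  (forall i j, (i < size ks)%N -> (j < size ks)%N -> g i = g j -> i = j) ->
  (forall i, (i < size ks)%N -> (g i < size ks')%N) ->
  (forall i, (i < size ks)%N -> (nth 0 ks i <= nth 0 ks' (g i))%N) ->
  (forall j, (j < size ks')%N -> (forall i, (i < size ks)%N -> g i <> j) -> (2 <= nth 0 ks' j)%N) ->
  HR ks' n -> HR ks n.
Proof.
move=> ginj gb gle gcov H c Hc.
have [j [S [hj [hS hm]]]] := H (fun x y => g (c x y)) (fun x y hx hy => gb _ (Hc x y hx hy)).
have [i [hi gij]] : exists i, (i < size ks)%N /\ g i = j.
  case: (pselect (exists i, (i < size ks)%N /\ g i = j)) => // Hn; exfalso.
  have h2 := gcov j hj (fun i hi e => Hn (ex_intro _ i (conj hi e))).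
  rewrite -hS in h2; have [x [y [xS yS xy]]] := two_elems h2.
  apply: Hn; exists (c x y); split; first exact: Hc.
  exact: hm.
have hmi : monoc c i S.
  move=> x y xS yS xy; apply: ginj; [exact: Hc| exact: hi|].
  by rewrite gij; apply: hm.
have [S' [sub hS']] := @sub_card _ S (nth 0 ks i) ltac:(by rewrite hS -gij; apply: gle).
by exists i, S'; split => //; split => //; apply: mono_sub hmi.
Qed.

Lemma HR_perm s t n : perm_eq s t -> HR t n -> HR s n.
Proof.
move=> /(perm_iotaP 0) [Is pI ->].
have sz : size Is = size t by rewrite (perm_size pI) size_iota.
have uI : uniq Is by rewrite (perm_uniq pI) iota_uniq.
apply: (@HR_transfer _ _ (fun i => nth 0 Is i)); rewrite size_map.
- by move=> i j hi hj /eqP; rewrite nth_uniq // => /eqP.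
- move=> i hi; have : nth 0 Is i \in Is by apply: mem_nth.
  by rewrite (perm_mem pI) mem_iota.
- by move=> i hi; rewrite (nth_map 0).
- move=> j hj hn; exfalso.
  have jI : j \in Is by rewrite (perm_mem pI) mem_iota.
  apply: (hn (index j Is)); first by rewrite index_mem.
  by rewrite nth_index.
Qed.

Lemma HR_cons2 Y n : HR (2 :: Y) n -> HR Y n.
Proof.
apply: (@HR_transfer _ _ S) => //=.
- by move=> i j _ _ [].
- by move=> [|j] //= hj hn; exfalso; apply: (hn j).
Qed.

Lemma HR_nseq r a b n : (a <= b)%N -> HR (nseq r b) n -> HR (nseq r a) n.
Proof.
move=> ab; apply: (@HR_transfer _ _ id) => //; rewrite ?size_nseq //.
- by move=> i hi; rewrite !nth_nseq hi.
- by move=> j hj hn; exfalso; exact: (hn j).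
Qed.

Lemma sorted_enum_set n (A : {set 'I_n}) : sorted (fun x y : 'I_n => (x < y)%N) (enum A).
Proof.
rewrite -deprecated_filter_index_enum; apply: sorted_filter; first exact: ltn_trans.
rewrite /index_enum; case: index_enum_key => /=; rewrite -enumT.
rewrite (_ : (fun x y : 'I_n => (x < y)%N) = relpre val ltn) //.
rewrite -sorted_map val_enum_ord; exact: iota_ltn_sorted.
Qed.

Lemma sumn_set_nth ks i v : (i < size ks)%N ->
  (sumn (set_nth 0 ks i v) + nth 0 ks i = sumn ks + v)%N.
Proof.
elim: ks i => [|k ks IH] [|i] //= hi; first lia.
have := IH i hi; lia.
Qed.

Lemma card_bigcup_le (T : finType) m (F : 'I_m -> {set T}) :
  (#|\bigcup_(i < m) F i| <= \sum_(i < m) #|F i|)%N.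
Proof.
elim: m F => [|m IH] F; first by rewrite !big_ord0 cards0.
rewrite !big_ord_recr /= cardsU; apply: leq_trans (leq_subr _ _) _.
by apply: leq_add => //; exact: IH.
Qed.

Lemma HR_small ks i : (i < size ks)%N -> (nth 0 ks i <= 1)%N -> HR ks 1.
Proof.
move=> hi h1 c Hc; exists i; exists (if nth 0 ks i == 0%N then (finset.set0 : {set 'I_1}) else (finset.setT : {set 'I_1})).
split => //; split.
  by case: eqP => e; [rewrite cards0 e | rewrite cardsT card_ord; lia].
by move=> x y _ _; rewrite !ord1.
Qed.

Lemma HR_nil : HR [::] 1.
Proof. by move=> c Hc; have := Hc 0%N 0%N isT isT. Qed.

Lemma ramsey_step ks :
  (forall ks', (sumn ks' < sumn ks)%N -> exists n, HR ks' n) -> exists n, HR ks n.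
Proof.
move=> IH.
case: (boolP (has (fun k => k <= 1)%N ks)) => [/hasP [x xks x1]|/hasPn hall].
  by exists 1%N; apply: (@HR_small ks (index x ks)); rewrite ?index_mem ?nth_index.
have [->|nz] := eqVneq ks [::]; first by exists 1%N; exact: HR_nil.
have szp : (0 < size ks)%N by case: ks nz {IH hall}.
pose dec i := set_nth 0 ks i (nth 0 ks i).-1.
have hdec : forall i, exists N, (i < size ks)%N -> HR (dec i) N.
  move=> i; case: (ltnP i (size ks)) => hi; last by exists 0%N.
  have [N HN] := IH (dec i) ltac:(have := sumn_set_nth ((nth 0 ks i).-1) hi;
     have := hall (nth 0 ks i) (mem_nth 0 hi); rewrite /dec /=; lia).
  by exists N.
have [N HN] := boolp.choice hdec.
exists (\sum_(i < size ks) N i).+1.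
set n := (\sum_(i < size ks) N i).+1.
move=> c Hc.
pose A (i : 'I_(size ks)) := [set y : 'I_n | (0 < val y)%N && (c 0%N y == i)].
have [i hi] : exists i : 'I_(size ks), (N i <= #|A i|)%N.
  case: (pselect (exists i : 'I_(size ks), (N i <= #|A i|)%N)) => // Hn; exfalso.
  have hlt : forall i : 'I_(size ks), (#|A i| < N i)%N.
    by move=> i; rewrite ltnNge; apply/negP => h; apply: Hn; exists i.
  have h1 : (n.-1 <= \sum_(i < size ks) #|A i|)%N.
    apply: leq_trans (card_bigcup_le A).
    have -> : n.-1 = #|[set~ (ord0 : 'I_n)]| by rewrite cardsC1 card_ord.
    apply: subset_leq_card; apply/fintype.subsetP => y; rewrite !inE => hy.
    apply/bigcupP; exists (Ordinal (Hc 0%N y isT (ltn_ord y))) => //.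
    by rewrite inE lt0n eqxx andbT.
  have h2 : (\sum_(i < size ks) #|A i| + size ks <= \sum_(i < size ks) N i)%N.
    have -> : (\sum_(i < size ks) #|A i| + size ks = \sum_(i < size ks) (#|A i| + 1))%N.
      by rewrite big_split /= sum_nat_const card_ord muln1.
    by apply: leq_sum => j _; rewrite addn1; exact: hlt.
  rewrite /n /= in h1; have := leq_trans h2 h1; rewrite -{2}(addn0 (\sum_(i < size ks) #|A i|)) leq_add2l; lia.
pose e := enum (A i).
have se := sorted_enum_set (A i).
pose h (j : 'I_(N i)) : 'I_n := nth ord0 e j.
have sze : (N i <= size e)%N by rewrite /e -cardE.
have hinc : forall x y : 'I_(N i), (x < y)%N -> (h x < h y)%N.
  move=> x y xy; apply: (sorted_ltn_nth (fun a b c => @ltn_trans (val a) (val b) (val c)) ord0 se) => //.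
  - by rewrite inE (leq_trans (ltn_ord x)).
  - by rewrite inE (leq_trans (ltn_ord y)).
have hA : forall j, h j \in A i.
  by move=> j; rewrite -mem_enum; apply: mem_nth; apply: leq_trans sze.
pose c' x y := c (lf h x) (lf h y).
have szd : size (dec i) = size ks by rewrite size_set_nth; apply/maxn_idPr.
have Hc' : forall x y, (x < N i)%N -> (y < N i)%N -> (c' x y < size (dec i))%N.
  move=> x y hx hy; rewrite /c' szd -[x]/(val (Ordinal hx)) -[y]/(val (Ordinal hy)) !lfE.
  by apply: Hc.
have [j [S' [hj [hS' hm']]]] := HN i (ltn_ord i) c' Hc'.
have [eS hmS] := mono_img hinc hm'.
rewrite /dec nth_set_nth /= in hS'.
case: (eqVneq j (val i)) hS' => [ej|nej] hS'; last first.
  exists j, (h @: S'); split; first by rewrite -szd.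
  by split => //; rewrite eS hS'.
exists j, (ord0 |: (h @: S')); split; first by rewrite -szd.
have n0 : (ord0 : 'I_n) \notin h @: S'.
  apply/negP => /imsetP [x _ hx]; have := hA x; rewrite -hx inE /=; lia.
split.
  rewrite cardsU1 n0 eS hS' ej /= add1n.
  have := hall (nth 0 ks i) (mem_nth 0 (ltn_ord i)); rewrite -ltnNge => h2.
  by rewrite prednK // ltnW.
move=> x y; rewrite !in_setU1 => /predU1P [->|xS] /predU1P [->|yS] xy //.
- move: yS => /imsetP [z _ ->]; have := hA z; rewrite inE => /andP [_ /eqP ->].
  by rewrite ej.
- by apply: hmS.
Qed.

Lemma ramsey_ex ks : exists n, HR ks n.
Proof.
move: {2}(sumn ks) (leqnn (sumn ks)) => s; elim: s ks => [|s IH] ks hs.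
  by apply: ramsey_step => ks'; lia.
by apply: ramsey_step => ks' h; apply: IH; lia.
Qed.

Lemma R_spec ks : HR ks (ramsey ks) /\ forall n, HR ks n -> (ramsey ks <= n)%N.
Proof. exact: ramsey_spec (ramsey_ex ks). Qed.

Lemma R_le ks n : HR ks n -> (ramsey ks <= n)%N.
Proof. exact: (R_spec ks).2. Qed.

Lemma R_gt ks n : ~ HR ks n -> (n < ramsey ks)%N.
Proof.
move=> H; rewrite ltnNge; apply/negP => h; apply: H.
exact: HR_mono (R_spec ks).1 h.
Qed.

Lemma R_perm s t : perm_eq s t -> ramsey s = ramsey t.
Proof.
move=> p; apply/eqP; rewrite eqn_leq; apply/andP; split.
  by apply: R_le; apply: HR_perm p (R_spec t).1.
by apply: R_le; apply: (HR_perm (s:=t) (t:=s)); [rewrite perm_sym | exact: (R_spec s).1].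
Qed.

Lemma R_cons2 Y : (ramsey Y <= ramsey (2 :: Y))%N.
Proof. by apply: R_le; apply: HR_cons2; exact: (R_spec _).1. Qed.

Lemma R_nseq r a b : (a <= b)%N -> (ramsey (nseq r a) <= ramsey (nseq r b))%N.
Proof. by move=> ab; apply: R_le; apply: HR_nseq ab _; exact: (R_spec _).1. Qed.

Lemma same_blk_lt B x y : x %/ B = y %/ B -> (x < y)%N = (x %% B < y %% B)%N.
Proof. by move=> e; rewrite {1}(divn_eq x B) {1}(divn_eq y B) e ltn_add2l. Qed.

Lemma same_blk_eq B x y : x %/ B = y %/ B -> x %% B = y %% B -> x = y.
Proof. by move=> e1 e2; rewrite (divn_eq x B) (divn_eq y B) e1 e2. Qed.

Lemma blk_lt B x y : (x %/ B < y %/ B)%N -> (x < y)%N.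
Proof.
move=> h; rewrite ltnNge; apply/negP => yx.
by have := leq_div2r B yx; rewrite leqNgt h.
Qed.

Lemma blk_proof A B (Bp : (0 < B)%N) (x : 'I_(A * B)) : (x %/ B < A)%N.
Proof. by rewrite ltn_divLR // ltn_ord. Qed.

Definition blk A B Bp (x : 'I_(A * B)) : 'I_A := Ordinal (@blk_proof A B Bp x).
Definition rmd A B (Bp : (0 < B)%N) (x : 'I_(A * B)) : 'I_B := Ordinal (ltn_pmod x Bp).

Lemma R_cat a b : ((ramsey a).-1 * (ramsey b).-1 <= (ramsey (a ++ b)).-1)%N.
Proof.
set A := (ramsey a).-1; set B := (ramsey b).-1.
have [A0|Ap] := posnP A; first by rewrite A0.
have [B0|Bp] := posnP B; first by rewrite B0 muln0.
have nHa : ~ HR a A by move=> H; have := R_le H; rewrite /A; lia.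
have nHb : ~ HR b B by move=> H; have := R_le H; rewrite /B; lia.
suff : ~ HR (a ++ b) (A * B) by move/R_gt; lia.
move: nHa => /boolp.existsNP [ca] /boolp.not_implyP [cab] /boolp.forallNP cano.
move: nHb => /boolp.existsNP [cb] /boolp.not_implyP [cbb] /boolp.forallNP cbno.
pose cc x y := if x %/ B == y %/ B then (size a + cb (x %% B) (y %% B))%N
               else ca (x %/ B) (y %/ B).
have Hcc : forall x y, (x < A * B)%N -> (y < A * B)%N -> (cc x y < size (a ++ b))%N.
  move=> x y hx hy; rewrite /cc size_cat; case: eqP => _.
    by rewrite ltn_add2l; apply: cbb; apply: ltn_pmod.
  by apply: leq_trans (leq_addr _ _); apply: cab; rewrite ltn_divLR.
move=> H; have [i [S [hi [hS hm]]]] := H cc Hcc.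
rewrite size_cat in hi; rewrite nth_cat in hS.
case: (ltnP i (size a)) => ia; [rewrite ia in hS | rewrite ltnNge ia /= in hS].
- have diff : forall x y : 'I_(A * B), x \in S -> y \in S -> (x < y)%N -> x %/ B != y %/ B.
    move=> x y xS yS xy; apply/negP => /eqP e; have := hm x y xS yS xy.
    by rewrite /cc e eqxx; lia.
  have inj : {in S &, injective (blk Bp)}.
    move=> x y xS yS /(congr1 val) /= e; apply: val_inj.
    case: (ltngtP x y) => // h; [have := diff x y xS yS h | have := diff y x yS xS h];
    by rewrite e eqxx.
  apply: (cano i); exists (blk Bp @: S); split => //; split; first by rewrite card_in_imset.
  move=> u v /imsetP[x xS ->] /imsetP[y yS ->] /= uv.
  have xy : (x < y)%N := blk_lt uv.
  by have := hm x y xS yS xy; rewrite /cc (negbTE (diff x y xS yS xy)).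
- have same : forall x y : 'I_(A * B), x \in S -> y \in S -> (x < y)%N ->
      x %/ B = y %/ B /\ cb (x %% B) (y %% B) = (i - size a)%N.
    move=> x y xS yS xy; have := hm x y xS yS xy; rewrite /cc.
    case: eqP => [e|ne] h; first by split => //; lia.
    have : (ca (x %/ B) (y %/ B) < size a)%N by apply: cab; rewrite ltn_divLR.
    lia.
  have inj : {in S &, injective (rmd Bp)}.
    move=> x y xS yS /(congr1 val) /= e; apply: val_inj.
    case: (ltngtP x y) => h.
    + by have [e1 _] := same x y xS yS h; apply: (same_blk_eq e1 e).
    + by have [e1 _] := same y x yS xS h; symmetry; apply: (same_blk_eq e1); rewrite e.
    + by [].
  apply: (cbno (i - size a)%N); exists (rmd Bp @: S); split; first lia.
  split; first by rewrite card_in_imset.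
  move=> u v /imsetP[x xS ->] /imsetP[y yS ->] /= uv.
  have xy : (x < y)%N.
    case: (ltngtP x y) => // h.
      have [e1 _] := same y x yS xS h; move: h; rewrite (same_blk_lt e1); lia.
    by move: uv; rewrite (val_inj h) ltnn.
  by have [_ ->] := same x y xS yS xy.
Qed.

Lemma R_comp q u v : (0 < u)%N -> (0 < v)%N ->
  ((ramsey (nseq q u)).-1 * (ramsey (nseq q v)).-1 <=
   (ramsey (nseq q (u.-1 * v.-1).+1)).-1)%N.
Proof.
move=> up vp.
set A := (ramsey (nseq q u)).-1; set B := (ramsey (nseq q v)).-1.
have [A0|Ap] := posnP A; first by rewrite A0.
have [B0|Bp] := posnP B; first by rewrite B0 muln0.
have nHa : ~ HR (nseq q u) A by move=> H; have := R_le H; rewrite /A; lia.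
have nHb : ~ HR (nseq q v) B by move=> H; have := R_le H; rewrite /B; lia.
suff : ~ HR (nseq q (u.-1 * v.-1).+1) (A * B) by move/R_gt; lia.
move: nHa => /boolp.existsNP [ca] /boolp.not_implyP [cab] /boolp.forallNP cano.
move: nHb => /boolp.existsNP [cb] /boolp.not_implyP [cbb] /boolp.forallNP cbno.
rewrite size_nseq in cab; rewrite size_nseq in cbb.
pose cc x y := if x %/ B == y %/ B then cb (x %% B) (y %% B) else ca (x %/ B) (y %/ B).
have Hcc : forall x y, (x < A * B)%N -> (y < A * B)%N ->
    (cc x y < size (nseq q (u.-1 * v.-1).+1))%N.
  move=> x y hx hy; rewrite /cc size_nseq; case: eqP => _.
    by apply: cbb; apply: ltn_pmod.
  by apply: cab; rewrite ltn_divLR.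
move=> H; have [i [S [hi [hS hm]]]] := H cc Hcc.
rewrite size_nseq in hi; rewrite nth_nseq hi in hS.
pose T := blk Bp @: S.
have monoT : monoc ca i T.
  move=> u0 v0 /imsetP[x xS ->] /imsetP[y yS ->] /= uv.
  have xy : (x < y)%N := blk_lt uv.
  have := hm x y xS yS xy; rewrite /cc; case: eqP => // e.
  by move: uv; rewrite e ltnn.
have hT : (#|T| < u)%N.
  rewrite ltnNge; apply/negP => h.
  have [T' [sub hT']] := sub_card h.
  apply: (cano i); exists T'; split; first by rewrite size_nseq.
  by split; [rewrite nth_nseq hi | apply: mono_sub monoT].
pose St (t : 'I_A) := [set x in S | x %/ B == t].
have hSt : forall t, (#|St t| < v)%N.
  move=> t; rewrite ltnNge; apply/negP => h.
  have inj : {in St t &, injective (rmd Bp)}.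
    move=> x y; rewrite !inE => /andP[_ /eqP ex] /andP[_ /eqP ey] /(congr1 val) /= e.
    by apply: val_inj; apply: same_blk_eq e; rewrite ex ey.
  have monoR : monoc cb i (rmd Bp @: St t).
    move=> u0 v0 /imsetP[x + ->] /imsetP[y + ->] /=.
    rewrite !inE => /andP[xS /eqP ex] /andP[yS /eqP ey] uv.
    have e : x %/ B = y %/ B by rewrite ex ey.
    have xy : (x < y)%N by rewrite (same_blk_lt e).
    by have := hm x y xS yS xy; rewrite /cc e eqxx.
  rewrite -(card_in_imset inj) in h.
  have [T' [sub hT']] := sub_card h.
  apply: (cbno i); exists T'; split; first by rewrite size_nseq.
  by split; [rewrite nth_nseq hi | apply: mono_sub monoR].
have h1 : (#|S| <= \sum_(t < A) #|St t|)%N.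
  apply: leq_trans (card_bigcup_le St).
  apply: subset_leq_card; apply/fintype.subsetP => x xS.
  by apply/bigcupP; exists (blk Bp x) => //; rewrite inE xS eqxx.
have h2 : (\sum_(t < A) #|St t| <= \sum_(t < A) (if t \in T then v.-1 else 0))%N.
  apply: leq_sum => t _; case: ifP => tT.
    by have := hSt t; lia.
  rewrite leqn0 cards_eq0; apply/eqP/setP => x; rewrite !inE.
  apply/negP => /andP[xS /eqP ex]; move: tT; rewrite -[t](@val_inj _ _ _ (blk Bp x)) //.
  by rewrite imset_f.
rewrite -big_mkcond sum_nat_const in h2.
have h3 : (#|T| * v.-1 <= u.-1 * v.-1)%N by apply: leq_mul => //; lia.
lia.
Qed.

Ltac perm_tac := apply/permP; let p := fresh "p" in intro p; rewrite /= ?count_cat ?count_nseq /= ?count_cat ?count_nseq /=;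
  repeat (match goal with |- context [p ?x] => case: (p x) => /= end); rewrite ?mul1n ?mul0n ?add0n ?addn0; lia.

Definition allge2 (X : seq nat) := all (fun k => 2 <= k)%N X.

Lemma split3 (hDC : DC) d X : allge2 X ->
  (ramsey ((d + 3) :: X) <= ramsey (nseq (d + 1) 3 ++ X))%N.
Proof.
elim: d X => [|d IH] X hX; first by [].
apply: leq_trans (R_cons2 _) _.
have h1 := hDC 3 (d + 3) X isT ltac:(lia) hX.
have e : (d.+1 + 3 = (d + 3).+1)%N by lia.
rewrite e; apply: leq_trans h1 _.
rewrite (@R_perm (3 :: (d + 3) :: X) ((d + 3) :: 3 :: X)); last by perm_tac.
apply: leq_trans (IH (3 :: X) hX) _.
by rewrite (@R_perm (nseq (d + 1) 3 ++ 3 :: X) (nseq (d.+1 + 1) 3 ++ X)) //; perm_tac.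
Qed.

Lemma allge2_cat X Y : allge2 (X ++ Y) = allge2 X && allge2 Y.
Proof. exact: all_cat. Qed.

Lemma allge2_nseq n k : (2 <= k)%N -> allge2 (nseq n k).
Proof. by move=> h; rewrite /allge2 all_nseq h orbT. Qed.

Lemma diag3 (hDC : DC) r k X : (3 <= k)%N -> allge2 X ->
  (ramsey (nseq r k ++ X) <= ramsey (X ++ nseq (r * (k - 2)) 3))%N.
Proof.
move=> hk; elim: r X => [|r IH] X hX.
  by rewrite (@R_perm (X ++ _) X) ?cats0 //; perm_tac.
have e : k = ((k - 3) + 3)%N by lia.
rewrite /= {1}e.
have hX' : allge2 (nseq r k ++ X) by rewrite allge2_cat hX allge2_nseq ?andbT //; lia.
apply: leq_trans (@split3 hDC (k - 3) (nseq r k ++ X) hX') _.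
rewrite (@R_perm _ (nseq r k ++ (X ++ nseq (k - 3 + 1) 3))); last by perm_tac.
have hX'' : allge2 (X ++ nseq (k - 3 + 1) 3) by rewrite allge2_cat hX allge2_nseq.
apply: leq_trans (IH _ hX'') _.
rewrite (@R_perm _ (X ++ nseq (r.+1 * (k - 2)) 3)) //.
apply/permP => p; rewrite !count_cat !count_nseq mulSn.
case: (p 3) => /=; lia.
Qed.

Lemma blkc (hDC : DC) j t k X : (2 <= k)%N -> (k < t)%N -> allge2 X ->
  (ramsey (nseq j k ++ (t + j) :: X) <= ramsey (nseq j k.+1 ++ t :: X))%N.
Proof.
move=> hk; elim: j t X => [|j IH] t X ht hX; first by rewrite addn0.
rewrite (@R_perm (nseq j.+1 k.+1 ++ t :: X) (k.+1 :: t :: (nseq j k.+1 ++ X)));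
  last by perm_tac.
have hZ : allge2 (nseq j k.+1 ++ X) by rewrite allge2_cat hX allge2_nseq ?andbT //; lia.
have h1 := hDC k.+1 t (nseq j k.+1 ++ X) ltac:(lia) ht hZ.
apply: leq_trans h1.
rewrite (@R_perm (k :: t.+1 :: nseq j k.+1 ++ X) (nseq j k.+1 ++ t.+1 :: (X ++ [:: k]))); last by perm_tac.
have hX' : allge2 (X ++ [:: k]) by rewrite allge2_cat hX /= /allge2 /= hk.
apply: leq_trans (IH t.+1 _ ltac:(lia) hX').
rewrite (@R_perm _ (nseq j k ++ (t.+1 + j) :: X ++ [:: k])) //.
apply/permP => p; rewrite /= ?count_cat /= ?count_cat ?count_nseq /= ?addn0 ?addSnnS.
case: (p k) => /=; lia.
Qed.

Lemma blocks (hDC : DC) q k Y : (3 <= k)%N -> allge2 Y ->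
  (ramsey (Y ++ nseq ((k - 2) * q) k ++ nseq q (2 * k - 1)) <=
   ramsey (nseq ((k - 1) * q) k.+1 ++ Y))%N.
Proof.
move=> hk; elim: q Y => [|q IH] Y hY.
  by rewrite !muln0 /= cats0.
set Z := nseq ((k - 1) * q) k.+1 ++ Y.
rewrite (@R_perm (nseq ((k - 1) * q.+1) k.+1 ++ Y) (nseq (k - 2) k.+1 ++ k.+1 :: Z)); last first.
  rewrite /Z; apply/permP => p; rewrite /= !count_cat !count_nseq /= !count_cat !count_nseq.
  rewrite mulnS; case: (p k.+1) => /=; lia.
have hZ : allge2 Z by rewrite /Z allge2_cat hY allge2_nseq ?andbT //; lia.
have h1 := @blkc hDC (k - 2) k.+1 k Z ltac:(lia) (ltnSn k) hZ.
apply: leq_trans h1.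
have e : (k.+1 + (k - 2) = 2 * k - 1)%N by lia.
rewrite e.
set Y' := Y ++ nseq (k - 2) k ++ [:: 2 * k - 1].
rewrite (@R_perm (nseq (k - 2) k ++ (2 * k - 1) :: Z) (nseq ((k - 1) * q) k.+1 ++ Y')); last first.
  rewrite /Z /Y'; perm_tac.
have hY' : allge2 Y'.
  rewrite /Y' !allge2_cat hY allge2_nseq /=; last lia.
  rewrite /allge2 /=; apply/andP; split => //; lia.
apply: leq_trans (IH _ hY').
rewrite (@R_perm _ (Y' ++ nseq ((k - 2) * q) k ++ nseq q (2 * k - 1))) //.
rewrite /Y'; apply/permP => p; rewrite !count_cat !count_nseq /= ?count_cat ?count_nseq !mulnS.
case: (p k) => /=; case: (p (2 * k - 1)) => /=; lia.
Qed.

Definition G k r := (ramsey (nseq r k)).-1.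

Lemma Gmul k a b : (G k a * G k b <= G k (a + b))%N.
Proof. by rewrite /G nseqD; apply: R_cat. Qed.

Lemma G1 k : (3 <= k)%N -> (2 <= G k 1)%N.
Proof.
move=> hk; rewrite /G.
suff : ~ HR (nseq 1 k) 2 by move/R_gt; lia.
move=> H; have [i [S [hi [hS _]]]] := H (fun _ _ => 0%N) (fun _ _ _ _ => isT).
move: hi hS; rewrite /= ltnS leqn0 => /eqP -> /= hS.
have := max_card S; rewrite hS card_ord; lia.
Qed.

Lemma Gpow k r : (3 <= k)%N -> (2 ^ r.+1 <= G k r.+1)%N.
Proof.
move=> hk; elim: r => [|r IH]; first by rewrite expn1; exact: G1.
have := Gmul k r.+1 1; rewrite addn1 => h; apply: leq_trans h; rewrite expnS mulnC.
by apply: leq_mul => //; exact: G1.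
Qed.

Lemma Gpos k r : (3 <= k)%N -> (0 < G k r.+1)%N.
Proof. by move=> hk; apply: leq_trans (Gpow r hk); rewrite expn_gt0. Qed.

Lemma Gpowm k m q : (G k m ^ q.+1 <= G k (q.+1 * m))%N.
Proof.
elim: q => [|q IH]; first by rewrite expn1 mul1n.
rewrite expnS mulSn; apply: leq_trans (Gmul k m (q.+1 * m)).
by apply: leq_mul.
Qed.

Lemma Gmon3 k r : (3 <= k)%N -> (G 3 r <= G k r)%N.
Proof. by move=> hk; rewrite /G; have := R_nseq r hk; lia. Qed.

Lemma Gdiag (hDC : DC) k r : (3 <= k)%N -> (G k r <= G 3 (r * (k - 2)))%N.
Proof.
move=> hk; have := @diag3 hDC r k [::] hk isT; rewrite cats0 /= /G; lia.
Qed.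

Lemma Gstep (hDC : DC) k q : (3 <= k)%N ->
  (G k q.+1 ^ (k - 1) * 2 ^ q.+1 <= G k.+1 ((k - 1) * q.+1))%N.
Proof.
move=> hk.
have h1 := @blocks hDC q.+1 k [::] hk isT.
have h2 : (G k ((k - 2) * q.+1) * G (2 * k - 1) q.+1 <= G k.+1 ((k - 1) * q.+1))%N.
  have := R_cat (nseq ((k - 2) * q.+1) k) (nseq q.+1 (2 * k - 1)).
  rewrite /G; move: h1; rewrite /= cats0; lia.
have h3 : (G k q.+1 * G 3 q.+1 <= G (2 * k - 1) q.+1)%N.
  have := @R_comp q.+1 k 3 ltac:(lia) isT.
  have -> : ((k.-1 * 2).+1 = 2 * k - 1)%N by lia.
  by [].
have h4 : (G k q.+1 ^ (k - 2) <= G k ((k - 2) * q.+1))%N.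
  have e : (k - 2 = (k - 3).+1)%N by lia.
  by rewrite e; apply: Gpowm.
have h5 : (2 ^ q.+1 <= G 3 q.+1)%N := Gpow q (leqnn 3).
have e : (k - 1 = (k - 2).+1)%N by lia.
rewrite e in h2 *; rewrite expnSr -mulnA.
apply: leq_trans h2; apply: leq_mul => //.
apply: leq_trans h3; rewrite leq_mul2l; apply/orP; right; exact: h5.
Qed.

Import numFieldNormedType.Exports.
Local Open Scope classical_set_scope.
Local Open Scope ring_scope.

Section An.
Variables (R : realType) (k : nat) (hk : (3 <= k)%N).

Definition g (r : nat) : R := (G k r)%:R.
Definition u (r : nat) : R := ln (g r) / r%:R.

Lemma g_ge1 r : (0 < r)%N -> 1 <= g r.
Proof.
case: r => // r _; rewrite /g ler1n.
exact: Gpos.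
Qed.

Lemma g_gt0 r : (0 < r)%N -> 0 < g r.
Proof. by move=> h; apply: lt_le_trans (g_ge1 h). Qed.

Lemma u_ge0 r : 0 <= u r.
Proof.
case: r => [|r]; first by rewrite /u invr0 mulr0.
by apply: divr_ge0 => //; apply: ln_ge0; apply: g_ge1.
Qed.

Lemma lng_mon a b : (0 < a)%N -> (a <= b)%N -> ln (g a) <= ln (g b).
Proof.
move=> ha ab; rewrite ler_ln ?posrE ?g_gt0 //; last exact: leq_trans ab.
rewrite /g ler_nat.
have -> : b = (a + (b - a))%N by lia.
case: (posnP (b - a)) => [->|hp]; first by rewrite addn0.
apply: leq_trans (Gmul k a (b - a)); rewrite -{1}[G k a]muln1 leq_mul2l.
apply/orP; right; have := g_ge1 hp; rewrite /g ler1n //.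
Qed.

Lemma lng_pow m q : (0 < m)%N -> q.+1%:R * ln (g m) <= ln (g (q.+1 * m)).
Proof.
move=> hm; rewrite mulr_natl -lnXn ?g_gt0 //.
rewrite ler_ln ?posrE ?exprn_gt0 ?g_gt0 ?muln_gt0 //.
by rewrite /g -natrX ler_nat; apply: Gpowm.
Qed.

Lemma fek m r : (0 < m)%N -> (m <= r)%N -> u m * (1 - m%:R / r%:R) <= u r.
Proof.
move=> hm hmr.
have hr : (0 < r)%N by apply: leq_trans hmr.
set q := (r %/ m)%N.
have hq : (0 < q)%N by rewrite divn_gt0.
have hqm : (q * m <= r)%N by rewrite leq_divM.
have hqm2 : (r <= q * m + m)%N.
  have := ltn_pmod r hm; have := divn_eq r m; rewrite -/q; lia.
have L1 : q%:R * ln (g m) <= ln (g r).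
  have e : q = (q.-1).+1 by rewrite prednK.
  apply: le_trans (lng_mon _ hqm); last by rewrite muln_gt0 hq.
  by rewrite {1}e [in X in (_ <= X)]e; apply: lng_pow.
have rp : 0 < r%:R :> R by rewrite ltr0n.
have mp : 0 < m%:R :> R by rewrite ltr0n.
have L0 : 0 <= ln (g m) by apply: ln_ge0; apply: g_ge1.
have L2 : r%:R - m%:R <= q%:R * m%:R :> R.
  by rewrite lerBlDr -natrM -natrD ler_nat.
rewrite /u.
have e1 : ln (g m) / m%:R * (1 - m%:R / r%:R) = (ln (g m) / m%:R) * (r%:R - m%:R) / r%:R.
  by field; rewrite !lt0r_neq0.
rewrite e1 ler_pM2r ?invr_gt0 //.
apply: le_trans L1.
have e2 : q%:R * ln (g m) = (ln (g m) / m%:R) * (q%:R * m%:R).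
  by field; rewrite ?lt0r_neq0.
rewrite e2; apply: ler_wpM2l => //.
by apply: divr_ge0 => //; apply: ltW.
Qed.

Lemma ramsey_pos ks : all (fun k => 0 < k)%N ks -> (0 < ramsey ks)%N.
Proof.
move=> hall; apply: R_gt => H.
have [i [S [hi [hS _]]]] := H (fun _ _ => 0%N) (fun x y hx => ltac:(by [])).
have := (allP hall) (nth 0%N ks i) (mem_nth 0%N hi).
have := max_card S; rewrite hS card_ord; lia.
Qed.

Lemma rd_pos r : (0 < ramsey_diag r k)%N.
Proof.
apply: ramsey_pos; rewrite all_nseq; apply/orP; right; rewrite /=; lia.
Qed.

Lemma rd_eq r : (0 < r)%N -> (ramsey_diag r k)%:R = g r + 1 :> R.
Proof.
move=> hr; rewrite /g /G natr1 prednK //.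
exact: rd_pos.
Qed.

Definition y (r : nat) : R := ln ((ramsey_diag r k)%:R) / r%:R.

Lemma x_eq : (fun r : nat => ((ramsey_diag r k)%:R `^ (r%:R^-1) : R)) = expR \o y.
Proof.
apply/boolp.funext => r /=; rewrite /powR /y.
have -> : ((ramsey_diag r k)%:R == 0 :> R) = false.
  by apply/negbTE; rewrite pnatr_eq0 -lt0n rd_pos.
by rewrite mulrC.
Qed.

Lemma y_bounds r : (0 < r)%N -> u r <= y r /\ y r <= u r + ln 2 / r%:R.
Proof.
move=> hr; have g1 := g_ge1 hr; have g0 := g_gt0 hr.
have rp : 0 < r%:R :> R by rewrite ltr0n.
rewrite /y /u rd_eq //; split.
  rewrite ler_pM2r ?invr_gt0 // ler_ln ?posrE //; first lra.
  by apply: addr_gt0.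
have e : ln (g r) + ln 2 = ln (g r * 2) by rewrite lnM ?posrE.
rewrite -mulrDl ler_pM2r ?invr_gt0 // e ler_ln ?posrE; first lra.
  by apply: addr_gt0.
by apply: mulr_gt0.
Qed.

Definition E : set R := [set x | exists r, (0 < r)%N /\ x = u r].
Definition Bnd := exists M : R, forall r, (0 < r)%N -> u r <= M.

Lemma y_cvg_bnd : Bnd -> y @ \oo --> sup E.
Proof.
move=> [M hM].
have hs : has_sup E.
  split; first by exists (u 1); exists 1%N.
  by exists M => z [r [hr ->]]; exact: hM.
apply/cvgrPdist_lt => eps epos.
have eps2 : 0 < eps / 2 by apply: divr_gt0.
have [e [m [hm ->]] he] := sup_adherent eps2 hs.
have ub : forall r, (0 < r)%N -> u r <= sup E.
  by move=> r hr; apply: (sup_upper_bound hs); exists r.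
have um0 := u_ge0 m.
have l2 : 0 < ln 2 :> R by apply: ln_gt0; lra.
near=> r.
have hr1 : (m <= r)%N by near: r; exact: nbhs_infty_ge.
have hr2 : 2 * m%:R * u m / eps < r%:R by near: r; exact: nbhs_infty_gtr.
have hr3 : 2 * ln 2 / eps < r%:R by near: r; exact: nbhs_infty_gtr.
have hrp : (0 < r)%N by apply: leq_trans hr1.
have rp : 0 < r%:R :> R by rewrite ltr0n.
have [yb1 yb2] := y_bounds hrp.
have hf := fek hm hr1.
have ha : u m * m%:R / r%:R < eps / 2.
  rewrite ltr_pdivrMr //.
  by move: hr2; rewrite ltr_pdivrMr //; lra.
have hb : ln 2 / r%:R < eps / 2.
  rewrite ltr_pdivrMr //.
  by move: hr3; rewrite ltr_pdivrMr //; lra.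
have e1 : u m * (1 - m%:R / r%:R) = u m - u m * m%:R / r%:R by rewrite mulrBr mulr1 mulrA.
rewrite e1 in hf.
have := ub r hrp.
rewrite ltr_distlC; move=> h; apply/andP; split; lra.
Unshelve. all: end_near.
Qed.

Lemma L_bnd : Bnd -> Lk R k = (expR (sup E))%:E.
Proof.
move=> hB.
have hc : (expR \o y) @ \oo --> expR (sup E).
  by apply: (cvg_comp _ _ (y_cvg_bnd hB)); exact: continuous_expR.
rewrite /Lk.
have -> : (fun r : nat => (((ramsey_diag r k)%:R `^ (r%:R^-1) : R))%:E) = EFin \o (expR \o y).
  by rewrite -x_eq.
rewrite EFin_lim; last by apply/cvg_ex; eexists; exact: hc.
by rewrite (cvg_lim _ hc).
Qed.

Lemma L_unb : ~ Bnd -> Lk R k = +oo%E.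
Proof.
move=> hB.
have hc : (expR \o y) @ \oo --> +oo.
  apply/cvgryPge => A.
  set A' := Num.max A 1.
  have A'p : 0 < A' by rewrite lt_max ltr01 orbT.
  have [m [hm hum]] : exists m, (0 < m)%N /\ ln A' + 1 < u m.
    apply: boolp.contrapT => H; apply: hB; exists (ln A' + 1) => r hr.
    by rewrite leNgt; apply/negP => h; apply: H; exists r.
  have um0 := u_ge0 m.
  near=> r.
  have hr1 : (m <= r)%N by near: r; exact: nbhs_infty_ge.
  have hr2 : m%:R * u m < r%:R by near: r; exact: nbhs_infty_gtr.
  have hrp : (0 < r)%N by apply: leq_trans hr1.
  have rp : 0 < r%:R :> R by rewrite ltr0n.
  have [yb1 _] := y_bounds hrp.
  have hf := fek hm hr1.
  have ha : u m * m%:R / r%:R < 1.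
    by rewrite ltr_pdivrMr // mul1r mulrC.
  have e1 : u m * (1 - m%:R / r%:R) = u m - u m * m%:R / r%:R by rewrite mulrBr mulr1 mulrA.
  rewrite e1 in hf.
  have hy : ln A' < y r by lra.
  have hA : A <= A' by rewrite le_max lexx.
  apply: (le_trans hA); apply: ltW; rewrite /= -{1}(lnK A'p) ltr_expR //.
have -> : Lk R k = limn (EFin \o (expR \o y)) by rewrite /Lk -x_eq.
apply: cvg_lim => //; exact/cvgeryP.
Unshelve. all: end_near.
Qed.
End An.

Import numFieldNormedType.Exports.
Local Open Scope classical_set_scope.
Local Open Scope ring_scope.

Section Fin.
Variables (R : realType) (hDC : DC).

Lemma lng_le k a b : (3 <= k)%N -> (0 < a)%N -> (0 < b)%N -> (G k a <= G 3 b)%N ->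
  ln (g R k a) <= ln (g R 3 b).
Proof.
move=> hk ha hb h; rewrite ler_ln ?posrE ?g_gt0 //.
by rewrite /g ler_nat.
Qed.

Lemma Bnd_up k : (3 <= k)%N -> Bnd R 3 -> Bnd R k.
Proof.
move=> hk [M hM]; exists (M * (k - 2)%:R) => r hr.
have hN : (0 < r * (k - 2))%N by rewrite muln_gt0 hr; lia.
have h1 := lng_le hk hr hN (Gdiag hDC r hk).
have h2 := hM _ hN.
have rp : 0 < r%:R :> R by rewrite ltr0n.
have Np : 0 < (r * (k - 2))%:R :> R by rewrite ltr0n.
rewrite /u ler_pdivrMr //.
apply: le_trans h1 _.
move: h2; rewrite /u ler_pdivrMr // natrM => h2.
by have -> : M * (k - 2)%:R * r%:R = M * (r%:R * (k - 2)%:R) by ring.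
Qed.

Lemma Bnd_down k : (3 <= k)%N -> Bnd R k -> Bnd R 3.
Proof.
move=> hk [M hM]; exists M => r hr; apply: le_trans (hM r hr).
have rp : 0 < r%:R :> R by rewrite ltr0n.
rewrite /u ler_pM2r ?invr_gt0 // ler_ln ?posrE ?g_gt0 //.
by rewrite /g ler_nat; apply: Gmon3.
Qed.

Lemma hsupE k : Bnd R k -> has_sup (E k : set R).
Proof.
move=> [M hM]; split; first by exists (u R k 1); exists 1%N.
by exists M => z [r [hr ->]]; exact: hM.
Qed.

Lemma sup_lt k : (3 <= k)%N -> Bnd R k -> Bnd R k.+1 -> sup (E k : set R) < sup (E k.+1).
Proof.
move=> hk hB hB1.
have k1 : 0 < (k - 1)%:R :> R by rewrite ltr0n; lia.
have l2 : 0 < ln 2 :> R by apply: ln_gt0; lra.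
pose d : R := ln 2 / (k - 1)%:R / 2.
have dp : 0 < d by rewrite /d; apply: divr_gt0 => //; apply: divr_gt0.
have [e [q [hq ->]] he] := sup_adherent dp (hsupE hB).
case: q hq he => // q _ he.
have hN : (0 < (k - 1) * q.+1)%N by rewrite muln_gt0 /=; lia.
have hk1 : (3 <= k.+1)%N by lia.
have h1 : u R k.+1 ((k - 1) * q.+1) <= sup (E k.+1).
  by apply: (sup_upper_bound (hsupE hB1)); exists ((k - 1) * q.+1)%N.
have g0 : 0 < g R k q.+1 := g_gt0 R hk (ltn0Sn q).
have P1 : 0 < (G k q.+1 ^ (k - 1) * 2 ^ q.+1)%:R :> R.
  by rewrite ltr0n muln_gt0 !expn_gt0 Gpos.
have P2 : 0 < g R k.+1 ((k - 1) * q.+1) := g_gt0 R hk1 hN.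
have h2 : (k - 1)%:R * ln (g R k q.+1) + q.+1%:R * ln 2 <= ln (g R k.+1 ((k - 1) * q.+1)).
  have h : ln ((G k q.+1 ^ (k - 1) * 2 ^ q.+1)%:R : R) <= ln (g R k.+1 ((k - 1) * q.+1)).
    by rewrite ler_ln ?posrE // /g ler_nat; apply: Gstep.
  rewrite natrM !natrX lnM ?posrE ?exprn_gt0 // !lnXn // in h.
  by rewrite !mulr_natl.
have qp : 0 < q.+1%:R :> R by rewrite ltr0n.
have h3 : u R k q.+1 + ln 2 / (k - 1)%:R <= u R k.+1 ((k - 1) * q.+1).
  rewrite /u ler_pdivlMr ?ltr0n //.
  have -> : (ln (g R k q.+1) / q.+1%:R + ln 2 / (k - 1)%:R) * ((k - 1) * q.+1)%:R =
            (k - 1)%:R * ln (g R k q.+1) + q.+1%:R * ln 2.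
    by rewrite natrM; field; rewrite !lt0r_neq0.
  exact: h2.
have e2 : ln 2 / (k - 1)%:R = 2 * d by rewrite /d; field; rewrite lt0r_neq0.
lra.
Qed.
End Fin.

Unset Implicit Arguments.
Local Open Scope ereal_scope.

Theorem corollary4 (R : realType) :
  DC ->
  ((forall k : nat, (3 <= k)%N -> Lk R k \is a fin_num) \/
   (forall k : nat, (3 <= k)%N -> Lk R k = +oo)) /\
  (Lk R 3 \is a fin_num -> forall k : nat, (3 <= k)%N -> Lk R k < Lk R k.+1).
Proof.
move=> hDC; split.
  case: (boolp.pselect (Bnd R 3)) => hB3; [left|right]; move=> k hk.
    by rewrite (L_bnd hk (Bnd_up hDC hk hB3)).
  apply: (L_unb hk) => hBk; apply: hB3; exact: Bnd_down hk hBk.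
move=> hf k hk.
have hB3 : Bnd R 3.
  case: (boolp.pselect (Bnd R 3)) => // h; move: hf.
  by rewrite (L_unb (leqnn 3) h).
have hk1 : (3 <= k.+1)%N by apply: leqW.
rewrite (L_bnd hk (Bnd_up hDC hk hB3)) (L_bnd hk1 (Bnd_up hDC hk1 hB3)) lte_fin ltr_expR.
by apply: sup_lt => //; apply: Bnd_up.
Qed.
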